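(* Let $\mathbf{X}$ be a Banach space, $\mathcal{S}\subset\mathbf{X}$, and let $\mathbb{P}$ be a Borel probability measure on $\mathcal{S}$ of growth order $s_0\in[0,\infty)$. Then $s_0\ge s^\ast_{\mathbf{X}}(\mathcal{S})$.
   Context: Let $(\mathbf{X},\|\cdot\|_{\mathbf{X}})$ be a real Banach space and $\mathcal{S}\subset\mathbf{X}$. A codec is a sequence $((E_R,D_R))_{R\in\mathbb{N}}$ of maps $E_R:\mathcal{S}\to\{0,1\}^R$, $D_R:\{0,1\}^R\to\mathbf{X}$; the distortion is $\delta_{\mathcal{S},\mathbf{X}}(E_R,D_R)=\sup_{\mathbf{x}\in\mathcal{S}}\|\mathbf{x}-D_R(E_R(\mathbf{x}))\|_{\mathbf{X}}$, and $s^\ast_{\mathbf{X}}(\mathcal{S})=\sup\{s\ge0:\exists\text{ codec with }\sup_RR^s\delta_{\mathcal{S},\mathbf{X}}(E_R,D_R)<\infty\}\in[0,\infty]$. $\mathcal{S}$ carries the trace of the Borel $\sigma$-algebra of $\mathbf{X}$. $\mathbb{P}$ has (logarithmic) growth order $s_0$ w.r.t. $\mathbf{X}$ if for every $s>s_0$ there exist $\varepsilon_0,c>0$ with $\mathbb{P}(\mathcal{S}\cap\mathcal{B}(\mathbf{x},\varepsilon;\mathbf{X}))\le2^{-c\varepsilon^{-1/s}}$ for all $\mathbf{x}\in\mathbf{X}$, $\varepsilon\in(0,\varepsilon_0)$ ($\mathcal{B}$ = closed ball). *)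

(* Defs.v *)
From HB Require Import structures.
From mathcomp Require Import all_boot all_order all_algebra.
From mathcomp Require Import all_classical all_reals all_analysis.
Set Implicit Arguments. Unset Strict Implicit. Unset Printing Implicit Defensive.
Import Order.TTheory GRing.Theory Num.Theory.
Import numFieldNormedType.Exports.
Local Open Scope classical_set_scope.
Local Open Scope ring_scope.

Definition Borel {R : realType} {X : normedModType R} : set (set X) :=
  <<s [set A : set X | open A] >>.

Definition trace_Borel {R : realType} {X : normedModType R} (S : set X)
  : set (set X) := [set S `&` B | B in Borel].

(* Measurable space used to carry a probability on (S, trace Borel):
   the carrier X with the sigma-algebra generated by the trace sets; a
   probability P on S is encoded as a probability on this space with
   P S = 1. *)
Definition traceS {R : realType} {X : normedModType R} (S : set X) :=
  g_sigma_algebraType (trace_Borel S).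

Definition cball {R : realType} {X : normedModType R} (x : X) (eps : R)
  : set X := [set y | `|x - y| <= eps].

Definition distortion {R : realType} {X : normedModType R} (S : set X)
  (n : nat) (E : X -> n.-tuple bool) (D : n.-tuple bool -> X) : \bar R :=
  ereal_sup [set (`|x - D (E x)|)%:E | x in S].

Definition achievable {R : realType} {X : normedModType R} (S : set X)
  (s : R) : Prop :=
  exists (E : forall n : nat, X -> n.-tuple bool)
         (D : forall n : nat, n.-tuple bool -> X) (C : R),
    forall n : nat, (1 <= n)%N ->
      (((n%:R `^ s)%:E * distortion S (E n) (D n)) <= C%:E)%E.

Definition optimal_exponent {R : realType} {X : normedModType R} (S : set X)
  : \bar R :=
  ereal_sup [set s%:E | s in [set s : R | 0 <= s /\ achievable S s]].

Definition growth_order {R : realType} {X : normedModType R} (S : set X)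
  (P : set (traceS S) -> \bar R) (s0 : R) : Prop :=
  forall s : R, s0 < s ->
    exists eps0 c : R, 0 < eps0 /\ 0 < c /\
      forall (x : X) (eps : R), 0 < eps -> eps < eps0 ->
        (P (S `&` cball x eps) <= (2 `^ (- (c * eps `^ (- s^-1))))%:E)%E.

(* Main.v *)
Require Import Defs.
From HB Require Import structures.
From mathcomp Require Import all_boot all_order all_algebra.
From mathcomp Require Import all_classical all_reals all_analysis.
From mathcomp Require Import lra.
Import Order.TTheory GRing.Theory Num.Theory.
Import numFieldNormedType.Exports.
Local Open Scope classical_set_scope.
Local Open Scope ring_scope.


Lemma key (R : realType) (s s' C c e0 : R) : 0 < s' -> s' < s -> 0 < C -> 0 < c -> 0 < e0 ->
  exists n : nat, [/\ (0 < n)%N, C / n%:R `^ s < e0 & n%:R < c * (C / n%:R `^ s) `^ (- s'^-1)].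
Proof.
move=> s'0 ss' C0 c0 e00.
have s0 : 0 < s by apply: lt_trans ss'.
pose M := Num.max ((ln C - ln e0) / s) ((ln C - s' * ln c) / (s - s')).
pose n := Num.Def.archi_bound (expR M).
have hn : expR M < n%:R := archi_boundP (expR_ge0 M).
have n0 : 0 < n%:R :> R by apply: lt_trans hn; exact: expR_gt0.
exists n.
have LM : M < ln n%:R by rewrite -ltr_expR lnK // posrE.
set L := ln n%:R in LM *.
have nE : n%:R `^ s = expR (s * L) by rewrite /powR gt_eqF.
have nE2 : n%:R = expR L by rewrite /L lnK.
have CE : C = expR (ln C) by rewrite lnK.
have eE : C / n%:R `^ s = expR (ln C - s * L) by rewrite nE {1}CE expRB.
split; first by rewrite -(ltr0n R).
- rewrite eE.
  have e0E : e0 = expR (ln e0) by rewrite lnK.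
  rewrite [X in _ < X]e0E ltr_expR.
  have : (ln C - ln e0) / s < L by apply: le_lt_trans LM; rewrite le_max lexx.
  rewrite ltr_pdivrMr // => h; nra.
- rewrite eE.
  have cE : c = expR (ln c) by rewrite lnK.
  rewrite -expRM [X in _ < X * _]cE -expRD {1}nE2 ltr_expR.
  have : (ln C - s' * ln c) / (s - s') < L.
    by apply: le_lt_trans LM; rewrite le_max lexx orbT.
  rewrite ltr_pdivrMr ?subr_gt0 // => h.
  rewrite -(ltr_pM2r s'0) mulrDl -mulrA mulNr mulVf ?gt_eqF // mulrN1.
  nra.
Qed.

Lemma meas_cball (R : realType) (X : normedModType R) (S : set X) (x : X) (e : R) :
  measurable (S `&` cball x e : set (traceS S)).
Proof.
apply: sub_sigma_algebra; exists (cball x e) => //.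
rewrite /Borel -[cball x e]setCK; apply: sigma_algebraC.
apply: sub_sigma_algebra; apply: closed_openC; exact: closed_closed_ball_.
Qed.

Lemma meas_S (R : realType) (X : normedModType R) (S : set X) :
  measurable (S : set (traceS S)).
Proof.
apply: sub_sigma_algebra; exists setT; last by rewrite setIT.
apply: sub_sigma_algebra; exact: openT.
Qed.

Theorem corollary2p5 (R : realType) (X : completeNormedModType R) (S : set X)
  (P : probability (traceS S) R) (PS : P S = 1%E)
  (s0 : R) (hs0 : 0 <= s0) (hgrowth : growth_order P s0) :
  (optimal_exponent S <= s0%:E)%E.
Proof.
rewrite /optimal_exponent; apply: ge_ereal_sup => _ [s [s_ge0 [E [D [C HC]]]] <-].
rewrite lee_fin leNgt; apply/negP => s0s.
pose s' := (s0 + s) / 2.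
have s0s' : s0 < s' by rewrite /s'; lra.
have s's : s' < s by rewrite /s'; lra.
have s'0 : 0 < s' by lra.
have [e0 [c [e00 [c0 hb]]]] := hgrowth s' s0s'.
pose C' := Num.max C 1.
have C'0 : 0 < C' by rewrite lt_max ltr01 orbT.
have [n [n0 he0 hn]] := @key R s s' C' c e0 s'0 s's C'0 c0 e00.
set eps := C' / n%:R `^ s in he0 hn.
have ns0 : 0 < n%:R `^ s by apply: powR_gt0; rewrite ltr0n.
have eps0 : 0 < eps by rewrite divr_gt0.
have cov : forall x, S x -> `|D n (E n x) - x| <= eps.
  move=> x Sx.
  have h := HC n n0.
  have hx : ((`|x - D n (E n x)|)%:E <= distortion S (E n) (D n))%E.
    by apply: ereal_sup_ubound; exists x.
  have : ((n%:R `^ s)%:E * (`|x - D n (E n x)|)%:E <= C%:E)%E.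
    by apply: le_trans h; apply: lee_wpmul2l => //; rewrite lee_fin ltW.
  rewrite -EFinM lee_fin distrC => h2.
  rewrite /eps ler_pdivlMr // mulrC; apply: le_trans h2 _; by rewrite le_max lexx.
pose F := fun k : nat =>
  (S `&` cball (D n (nth (nseq_tuple n false) (enum {: n.-tuple bool}) k)) eps : set (traceS S)).
have sub : (P S <= \sum_(k < size (enum {: n.-tuple bool})) P (F k))%E.
  apply: content_subadditive.
  - by move=> k _; exact: meas_cball.
  - exact: meas_S.
  - move=> x Sx; rewrite -bigcup_mkord.
    exists (index (E n x) (enum {: n.-tuple bool})); first by rewrite /= index_mem mem_enum.
    split => //; rewrite nth_index ?mem_enum //; exact: cov.
pose b := 2 `^ (- (c * eps `^ (- s'^-1))).
have each : forall k, (P (F k) <= b%:E)%E by move=> k; exact: hb.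
have : (1 <= (b *+ 2 ^ n)%:E)%E.
  rewrite -PS; apply: le_trans sub _.
  apply: (@le_trans _ _ (\sum_(k < size (enum {: n.-tuple bool})) b%:E)%E).
    by apply: lee_sum => k _; exact: each.
  by rewrite sumEFin sumr_const card_ord -cardE card_tuple card_bool.
rewrite lee_fin -mulr_natr natrX.
have -> : (2%:R : R) ^+ n = expR (n%:R * ln 2).
  by rewrite expRM_natl lnK // posrE.
move=> H.
have bE : b = expR (- (c * eps `^ (- s'^-1)) * ln 2) by rewrite /b /powR pnatr_eq0.
rewrite bE -expRD leNgt expR_lt1 -leNgt in H.
have l2 : 0 < ln (2 : R) by apply: ln_gt0; lra.
set y := c * _ in hn H.
move: hn H l2; clear; move: y => y; nra.
Qed.
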